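(* Let $n\ge1$, $K\ge1$ and $p_n\in[0,1]$. Let $(\mathcal{G}(n),\mathcal{A}_1(n),\dots,\mathcal{A}_K(n))$ be the output of the SFAP exploration algorithm, and let $\mathcal{N}_i(n)$ be the set of vertices using frequency $i$ in the final state of the SFAP model on $G(n,p_n)$ (both described in the context). Then the joint distribution of $(\mathcal{G}(n),\mathcal{A}_1(n),\dots,\mathcal{A}_K(n))$ is identical to that of $(G(n,p_n),\mathcal{N}_1(n),\dots,\mathcal{N}_K(n))$.
   Context: $G(n,p_n)$ is the Erdős–Rényi random graph on $[n]$ with independent edge probability $p_n$. SFAP (sequential frequency assignment) model: given a realization of $G(n,p_n)$, all vertices start with no frequency ($f_v(0)=0$). At each step a vertex $v$ is chosen uniformly at random among vertices not selected before; if the set $\{1,\dots,K\}\setminus\{f_u: u \text{ a neighbour of } v,\ f_u\ne0\}$ is nonempty, $v$ receives its minimum as frequency; otherwise $v$ gets frequency $0$ (frozen). $\mathcal{N}_i(n)$ is the set of vertices with frequency $i$ after $n$ steps. SFAP exploration algorithm: maintain $\mathcal{A}_k(t)$ ($1\le k\le K$: explored vertices with frequency $k$; $\mathcal{A}_0(t)$: explored frozen vertices) and unexplored set $\mathcal{U}(t)$, initially $\mathcal{A}_k(0)=\varnothing$, $\mathcal{U}(0)=[n]$. At step $t+1$, select $v\in\mathcal{U}(t)$ uniformly at random, remove it from $\mathcal{U}$, and join it to each vertex of $\mathcal{A}(t)=\bigcup_{k=0}^K\mathcal{A}_k(t)$ independently with probability $p_n$. If $\mathcal{F}_v=\{1,\dots,K\}\setminus\{k\ge1: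 v\text{ joined to some vertex of }\mathcal{A}_k(t)\}$ is nonempty, $v$ joins $\mathcal{A}_{\min\mathcal{F}_v}$; otherwise $v$ joins $\mathcal{A}_0$. After $n$ steps the algorithm outputs $(\mathcal{A}_1(n),\dots,\mathcal{A}_K(n))$ and the graph $\mathcal{G}(n)$ on $[n]$ of all edges added. *)

(* Defs.v *)
From HB Require Import structures.
From mathcomp Require Import all_boot all_order all_algebra.
Set Implicit Arguments. Unset Strict Implicit. Unset Printing Implicit Defensive.
Import Order.TTheory GRing.Theory Num.Theory.
Local Open Scope ring_scope.

(* A graph on [n] = 'I_n is its edge set: a set of 2-element subsets.
   A frequency state is f : 'I_n -> option 'I_K.+1 :
   None = not yet selected/explored, Some 0 = frozen, Some k (1<=k<=K) = frequency k. *)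
Definition graph (n : nat) := {set {set 'I_n}}.
Definition fstate (n K : nat) := {ffun 'I_n -> option 'I_K.+1}.

Definition used_freqs (n K : nat) (f : fstate n K) (adj : pred 'I_n) : pred nat :=
  fun i => [&& [exists u, adj u && (f u == Some (inord i))], (0 < i)%N & (i <= K)%N].

(* min of {1..K} \ used, or 0 (frozen) if this set is empty *)
Definition new_freq (K : nat) (used : pred nat) : 'I_K.+1 :=
  let j := find (fun i => ~~ used i) (iota 1 K) in
  inord (if (j < K)%N then j.+1 else 0%N).

Definition unselected (n K : nat) (f : fstate n K) : {set 'I_n} := [set u | f u == None].
Definition selected (n K : nat) (f : fstate n K) : {set 'I_n} := [set u | f u != None].

(* Output (N_1,...,N_K) / (A_1,...,A_K): component k : 'I_K is frequency k+1. *)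
Definition freq_sets (n K : nat) (f : fstate n K) : {ffun 'I_K -> {set 'I_n}} :=
  [ffun k : 'I_K => [set v | f v == Some (inord k.+1)]].

Definition gnp_prob (R : realFieldType) (n : nat) (p : R) (E : graph n) : R :=
  if E \subset [set e : {set 'I_n} | #|e| == 2%N]
  then p ^+ #|E| * (1 - p) ^+ ('C(n, 2) - #|E|)%N
  else 0.

Definition sfap_update (n K : nat) (E : graph n) (f : fstate n K) (v : 'I_n) : fstate n K :=
  [ffun u => if u == v
             then Some (new_freq K (used_freqs f (fun w => [set w; v] \in E)))
             else f u].

Definition sfap_kernel (R : realFieldType) (n K : nat) (E : graph n)
  (f f' : fstate n K) : R :=
  \sum_(v in unselected f) (sfap_update E f v == f')%:R / #|unselected f|%:R.

Fixpoint sfap_dist (R : realFieldType) (n K : nat) (E : graph n) (t : nat)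
  : fstate n K -> R :=
  match t with
  | 0 => fun f => (f == [ffun => None])%:R
  | t'.+1 => fun f' => \sum_(f : fstate n K) sfap_dist R E t' f * sfap_kernel R E f f'
  end.

Definition sfap_law (R : realFieldType) (n K : nat) (p : R)
  (E : graph n) (A : {ffun 'I_K -> {set 'I_n}}) : R :=
  \sum_(E' : graph n) \sum_(f : fstate n K | (E' == E) && (freq_sets f == A))
     gnp_prob p E' * sfap_dist R E' n f.

(* state: (frequency state: None = in U, Some k = in A_k ; edges added so far) *)
Definition estate (n K : nat) := (fstate n K * graph n)%type.

Definition explore_update (n K : nat) (s : estate n K) (v : 'I_n) (S : {set 'I_n})
  : estate n K :=
  ([ffun u => if u == v
              then Some (new_freq K (used_freqs s.1 (fun w => w \in S)))
              else s.1 u],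
   s.2 :|: [set [set v; w] | w in S]).

Definition explore_kernel (R : realFieldType) (n K : nat) (p : R)
  (s s' : estate n K) : R :=
  \sum_(v in unselected s.1) \sum_(S : {set 'I_n} | S \subset selected s.1)
     (explore_update s v S == s')%:R / #|unselected s.1|%:R
       * (p ^+ #|S| * (1 - p) ^+ (#|selected s.1| - #|S|)%N).

Fixpoint explore_dist (R : realFieldType) (n K : nat) (p : R) (t : nat)
  : estate n K -> R :=
  match t with
  | 0 => fun s => (s == ([ffun => None], set0))%:R
  | t'.+1 => fun s' => \sum_(s : estate n K) explore_dist p t' s * explore_kernel p s s'
  end.

Definition explore_law (R : realFieldType) (n K : nat) (p : R)
  (E : graph n) (A : {ffun 'I_K -> {set 'I_n}}) : R :=
  \sum_(s : estate n K | (s.2 == E) && (freq_sets s.1 == A)) explore_dist p n s.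

(* Main.v *)
Require Import Defs.
From HB Require Import structures.
From mathcomp Require Import all_boot all_order all_algebra.
From mathcomp Require Import ring.
Set Implicit Arguments. Unset Strict Implicit. Unset Printing Implicit Defensive.
Import Order.TTheory GRing.Theory Num.Theory.
Local Open Scope ring_scope.

Section Indep.
Variables (R : realFieldType) (I : finType) (q : I -> bool -> R).
Hypothesis Hq : forall i, q i true + q i false = 1.

Definition wt (B E : {set I}) := \prod_(i in B) q i (i \in E).
Definition wall (E : {set I}) := \prod_i q i (i \in E).

Lemma wall_split (B E : {set I}) : wall E = wt B E * wt (~: B) E.
Proof.
rewrite /wall /wt (bigID (fun i => i \in B)) /=; congr (_ * _).
by apply: eq_bigl => i; rewrite inE.
Qed.

Lemma wt_sum1 (B : {set I}) : \sum_(T : {set I} | T \subset B) wt B T = 1.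
Proof.
have := @bigA_distr R 0 1 *%R +%R I
  (fun i => if i \in B then q i true else 0)
  (fun i => if i \in B then q i false else 1).
rewrite [X in X = _ -> _]big1; last first. { move=> i _; case: (i \in B); first exact: Hq. by rewrite /= add0r. }
move=> ->; rewrite big_mkcond; apply: eq_bigr => J _ /=.
case: (boolP (J \subset B)) => JB.
  rewrite /wt [RHS](bigID (fun i => i \in B)) /= [X in _ = _ * X]big1 ?mulr1; last first.
    move=> i iB; have iJ : i \notin J by apply: contra iB; apply: (subsetP JB).
    by rewrite (negbTE iJ) (negbTE iB).
  by apply: eq_bigr => i iB; rewrite iB; case: (i \in J).
case/subsetPn: JB => i iJ iB.
by rewrite (bigD1 i) //= iJ (negbTE iB) mul0r.
Qed.

Lemma indep (B T : {set I}) (h : {set I} -> R) : T \subset B -> (forall E, h E = h (E :\: B)) ->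
  \sum_E wall E * h E * (E :&: B == T)%:R = wt B T * \sum_E wall E * h E.
Proof.
move=> TB Hh.
pose M := \sum_(D | D :&: B == set0) wt (~: B) D * h D.
have L : forall T' : {set I}, T' \subset B ->
    \sum_(E | E :&: B == T') wall E * h E = wt B T' * M.
  move=> T' /subsetP T'B.
  rewrite (reindex_onto (fun D => D :|: T') (fun E => E :\: B)); last first.
    move=> E /eqP <-; apply/setP => x; rewrite !inE.
    by case: (x \in E); case: (x \in B).
  rewrite /M big_distrr /=; apply: congr_big => //.
    move=> D; apply/andP/eqP.
      case=> _ /eqP /setP H2; apply/setP => x; move: (H2 x); rewrite !inE.
      by case: (x \in D); case: (x \in B).
    move/setP=> H; split; apply/eqP/setP => x; move: (H x) (T'B x); rewrite !inE;
      by case: (x \in D); case: (x \in B); case: (x \in T') => //= _ ->.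
  move=> D /andP[_ /eqP HD].
  have HDB : forall x, x \in D -> x \notin B.
    by move=> x; rewrite -HD inE => /andP[].
  rewrite (wall_split B) mulrA; congr (_ * _ * _).
  - apply: eq_bigr => i iB; rewrite inE; congr (q i _).
    have iD : i \notin D by apply: contraL iB; apply: HDB.
    by rewrite (negbTE iD).
  - apply: eq_bigr => i; rewrite inE => iB; rewrite inE; congr (q i _).
    have iT : i \notin T' by apply: contra iB; apply: T'B.
    by rewrite (negbTE iT) orbF.
  - rewrite Hh [RHS]Hh; congr h; apply/setP => x; rewrite !inE.
    by case xT: (x \in T'); [rewrite (T'B x xT) | rewrite orbF].
transitivity (\sum_(E | E :&: B == T) wall E * h E).
  by rewrite [RHS]big_mkcond; apply: eq_bigr => E _; case: eqP; rewrite ?mulr1 ?mulr0.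
rewrite L //.
rewrite (partition_big (fun E => E :&: B) (fun T' => T' \subset B)) /=; last first.
  by move=> E _; apply: subsetIr.
rewrite (eq_bigr (fun T' => wt B T' * M)); last first.
  by move=> T' T'B; rewrite -L //.
by rewrite -big_distrl /= wt_sum1 mul1r.
Qed.

End Indep.

Section Graph.
Variables (R : realFieldType) (n : nat) (p : R).

Definition qg (e : {set 'I_n}) (b : bool) : R :=
  if b then (if #|e| == 2%N then p else 0) else (if #|e| == 2%N then 1 - p else 1).

Lemma qg_sum e : qg e true + qg e false = 1.
Proof. by rewrite /qg; case: (#|e| == 2%N); rewrite ?add0r // addrC subrK. Qed.

Lemma gnp_wall (E : graph n) : gnp_prob p E = wall qg E.
Proof.
rewrite /gnp_prob /wall (bigID (fun e => e \in E)) /=.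
case: ifP => HE.
  rewrite (eq_bigr (fun _ => p)); last first.
    by move=> e eE; rewrite eE /qg; move/subsetP: HE => /(_ e eE); rewrite inE => ->.
  rewrite prodr_const (bigID (fun e : {set 'I_n} => #|e| == 2%N)) /=.
  rewrite [X in _ * (_ * X)]big1 ?mulr1; last first.
    by move=> e /andP[/negbTE eE /negbTE c]; rewrite eE /qg c.
  rewrite (eq_bigr (fun _ => 1 - p)); last first.
    by move=> e /andP[/negbTE eE c]; rewrite eE /qg c.
  rewrite prodr_const; congr (_ * _ ^+ _).
  have -> : #|[pred e : {set 'I_n} | (e \notin E) && (#|e| == 2%N)]| =
            #|[set e : {set 'I_n} | #|e| == 2%N] :\: E|.
    by apply: eq_card => e; rewrite !inE andbC.
  rewrite cardsD card_draws card_ord; congr (_ - _)%N.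
  by move/setIidPr: HE => ->.
case/subsetPn: HE => e eE; rewrite inE => He.
by rewrite (bigD1 e) //= eE /qg (negbTE He) !mul0r.
Qed.

Definition restr (X : {set 'I_n}) (E : graph n) : graph n :=
  [set e in E | (e \subset X) && (#|e| == 2%N)].
Definition star (v : 'I_n) (S : {set 'I_n}) : graph n := [set [set v; w] | w in S].
Definition nbr (E : graph n) (X : {set 'I_n}) (v : 'I_n) : {set 'I_n} :=
  [set w in X | [set w; v] \in E].

Lemma set2_inj (v : 'I_n) : injective (fun w => [set v; w]).
Proof.
move=> w1 w2 /= H.
have h1 : w1 \in [set v; w2] by rewrite -H !inE eqxx orbT.
have h2 : w2 \in [set v; w1] by rewrite H !inE eqxx orbT.
move: h1 h2; rewrite !inE => /orP[/eqP->|/eqP->//] /orP[/eqP->|/eqP->//] //.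
Qed.

Lemma star_inj v : injective (star v).
Proof. exact: imset_inj (@set2_inj v). Qed.

Lemma restr_add (X : {set 'I_n}) v (E : graph n) : v \notin X ->
  restr (v |: X) E = restr X E :|: star v (nbr E X v).
Proof.
move=> vX; apply/setP => e; rewrite !inE; apply/idP/idP.
  case/andP=> eE /andP[sub c2].
  case: (boolP (v \in e)) => ve.
    case/cards2P: c2 => x [y [xy ee]].
    have [w [ew wv]] : exists w, e = [set v; w] /\ w != v.
      move: xy ve; rewrite ee !inE => xy /orP[/eqP vx|/eqP vy].
        by exists y; split; [rewrite vx | rewrite eq_sym vx].
      by exists x; split; [rewrite setUC vy | rewrite vy].
    have wX : w \in X.
      move/subsetP: sub => /(_ w); rewrite ew !inE eqxx orbT (negbTE wv) => /(_ isT) /=. done.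
    apply/orP; right; apply/imsetP; exists w => //.
    by rewrite inE wX /= setUC -ew.
  apply/orP; left; rewrite eE /= c2 andbT.
  apply/subsetP => x xe; move/subsetP: sub => /(_ x xe); rewrite inE.
  rewrite inE; case/orP=> [/eqP xv|//]; by move: ve; rewrite -xv xe.
case/orP.
  case/andP=> eE /andP[sub c2]; rewrite eE c2 andbT /=.
  by apply: subset_trans sub (subsetU1 _ _).
case/imsetP=> w; rewrite inE => /andP[wX wvE] ->.
have wv : w != v by apply: contraNneq vX => <-.
rewrite setUC wvE /= cards2 wv andbT setUC.
apply/subsetP => x; rewrite !inE => /orP[->//|/eqP->]; by rewrite wX orbT.
Qed.

Lemma restr_star (X : {set 'I_n}) v (E : graph n) : v \notin X -> restr X (E :\: star v X) = restr X E.
Proof.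
move=> vX; apply/setP => e; rewrite !inE.
have H : e \subset X -> e \notin star v X.
  move=> sub; apply/negP => /imsetP[w _ ew]; move/subsetP: sub => /(_ v).
  by rewrite ew !inE eqxx (negbTE vX) => /(_ isT).
by case sub: (e \subset X); [rewrite (H sub) | rewrite !andbF].
Qed.

Lemma meet_star (X : {set 'I_n}) v (E : graph n) : E :&: star v X = star v (nbr E X v).
Proof.
apply/setP => e; rewrite inE; apply/andP/imsetP.
  case=> eE /imsetP[w wX ew]; exists w => //.
  by rewrite inE wX /= setUC -ew.
case=> w; rewrite inE => /andP[wX wE] ->; split.
  by rewrite setUC.
by apply/imsetP; exists w.
Qed.

Lemma restr_restr (X Y : {set 'I_n}) (E : graph n) : Y \subset X -> restr Y (restr X E) = restr Y E.
Proof.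
move=> YX; apply/setP => e; rewrite !inE.
case: (e \in E); case eY: (e \subset Y); rewrite /= ?andbF //.
by rewrite (subset_trans eY YX) /= andbb.
Qed.

End Graph.

Section Sfap.
Variables (R : realFieldType) (n K : nat).

Lemma new_freq_ext (f : fstate n K) (a1 a2 : pred 'I_n) :
  (forall u, f u != None -> a1 u = a2 u) ->
  new_freq K (used_freqs f a1) = new_freq K (used_freqs f a2).
Proof.
move=> H; rewrite /new_freq.
have E : (fun i => ~~ used_freqs f a1 i) =1 (fun i => ~~ used_freqs f a2 i).
  move=> i; rewrite /used_freqs; congr (~~ [&& _, _ & _]).
  apply: eq_existsb => u.
  by case: (eqVneq (f u) None) => [-> | fu]; rewrite ?andbF // H.
by rewrite (eq_find E).
Qed.

Lemma sel_upd (f : fstate n K) v x :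
  selected [ffun u => if u == v then Some x else f u] = v |: selected f.
Proof. by apply/setP => u; rewrite !inE ffunE; case: (u == v). Qed.

Lemma sel_none : selected ([ffun => None] : fstate n K) = set0.
Proof. by apply/setP => u; rewrite !inE ffunE. Qed.

Lemma unsel_sel (f : fstate n K) v : (v \in unselected f) = (v \notin selected f).
Proof. by rewrite !inE negbK. Qed.

Lemma sd_card (E : graph n) t (f : fstate n K) :
  #|selected f| != t -> sfap_dist R E t f = 0.
Proof.
elim: t f => [|t IH] f /=.
  move=> Hf; case: eqP => [eq0|_]; last by [].
  by move: Hf; rewrite eq0 sel_none cards0.
move=> Hf; apply: big1 => f0 _.
case: (eqVneq #|selected f0| t) => h; last by rewrite IH // mul0r.
rewrite /sfap_kernel big1 ?mulr0 // => v vU.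
case: eqP => [upd|]; last by rewrite mul0r.
exfalso; move: Hf; rewrite -upd /sfap_update sel_upd cardsU1 -unsel_sel vU h.
by rewrite eqxx.
Qed.

Lemma upd_dep (E E' : graph n) (f0 f : fstate n K) v :
  v \in unselected f0 -> sfap_update E f0 v = f ->
  restr (selected f) E = restr (selected f) E' -> sfap_update E' f0 v = f.
Proof.
move=> vU upd Hr.
have Hsel : selected f = v |: selected f0 by rewrite -upd /sfap_update sel_upd.
rewrite -upd; apply/ffunP => u; rewrite !ffunE; case: eqP => // _.
congr Some; apply: new_freq_ext => w fw.
have wsel : w \in selected f0 by rewrite inE.
have wv : w != v by apply: contraTneq wsel => ->; rewrite -unsel_sel.
move/setP: Hr => /(_ [set w; v]); rewrite !inE cards2 wv Hsel !andbT.
have -> : [set w; v] \subset v |: selected f0.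
  by apply/subsetP => x; rewrite !inE => /orP[/eqP->|/eqP->]; rewrite ?fw ?eqxx ?orbT.
by rewrite !andbT => ->.
Qed.

Lemma sd_dep t (f : fstate n K) (E E' : graph n) :
  restr (selected f) E = restr (selected f) E' -> sfap_dist R E t f = sfap_dist R E' t f.
Proof.
elim: t f => [|t IH] f Hr //=.
apply: eq_bigr => f0 _.
have Hk : sfap_kernel R E f0 f = sfap_kernel R E' f0 f.
  apply: eq_bigr => v vU.
  rewrite (_ : (sfap_update E f0 v == f) = (sfap_update E' f0 v == f)) //.
  apply/eqP/eqP => H.
    exact: upd_dep vU H Hr.
  by apply: upd_dep vU H _; rewrite Hr.
rewrite Hk; have [->|nz] := eqVneq (sfap_kernel R E' f0 f) 0; first by rewrite !mulr0.
congr (_ * _); apply: IH.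
case: (pickP (fun v => (v \in unselected f0) && (sfap_update E' f0 v == f))).
  move=> v /andP[vU /eqP upd].
  have Hsel : selected f = v |: selected f0 by rewrite -upd /sfap_update sel_upd.
  by rewrite -(restr_restr E (subsetU1 v (selected f0))) -Hsel Hr restr_restr // Hsel subsetU1.
move=> none; exfalso; move/eqP: nz; apply.
apply: big1 => v vU; move: (none v); rewrite vU /= => ->; by rewrite mul0r.
Qed.

End Sfap.

Section Main.
Variables (R : realFieldType) (n K : nat) (p : R).

Definition updF (f : fstate n K) v (S : {set 'I_n}) : fstate n K :=
  [ffun u => if u == v then Some (new_freq K (used_freqs f (fun w => w \in S))) else f u].

Lemma su_updF (E : graph n) (f : fstate n K) v :
  sfap_update E f v = updF f v (nbr E (selected f) v).
Proof.
apply/ffunP => u; rewrite !ffunE; case: eqP => // _.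
congr Some; apply: new_freq_ext => w fw; by rewrite !inE fw.
Qed.

Lemma wt_star (X S : {set 'I_n}) v : S \subset X -> v \notin X ->
  wt (qg p) (star v X) (star v S) = p ^+ #|S| * (1 - p) ^+ (#|X| - #|S|).
Proof.
move=> SX vX.
have c2 : forall e, e \in star v X -> #|e| == 2%N.
  move=> e /imsetP[w wX ->]; rewrite cards2.
  by have -> : v != w by apply: contraNneq vX => ->.
have sub : star v S \subset star v X by apply: imsetS.
rewrite /wt (big_setID (star v S)) /= (setIidPr sub).
rewrite (eq_bigr (fun _ => p)); last first.
  by move=> e eS; rewrite eS /qg (c2 e (subsetP sub e eS)).
rewrite [X in _ * X = _](eq_bigr (fun _ => 1 - p)); last first.
  by move=> e; rewrite inE => /andP[/negbTE eS eX]; rewrite eS /qg (c2 e eX).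
rewrite !prodr_const cardsD (setIidPr sub) !card_imset //; exact: set2_inj.
Qed.

End Main.
Section Main2.
Variables (R : realFieldType) (n K : nat) (p : R).

Lemma key_v t (f f' : fstate n K) (G' : graph n) v : v \in unselected f ->
  \sum_(E : graph n) gnp_prob p E * sfap_dist R E t f *
     \sum_(S : {set 'I_n} | S \subset selected f)
        ((explore_update (f, restr (selected f) E) v S == (f', G'))%:R *
         (p ^+ #|S| * (1 - p) ^+ (#|selected f| - #|S|)))
  = \sum_(E : graph n) (restr (selected f') E == G')%:R * gnp_prob p E *
       sfap_dist R E t f * (sfap_update E f v == f')%:R.
Proof.
move=> vU; set X := selected f.
have vX : v \notin X by rewrite -unsel_sel.
pose phi S E := sfap_dist R E t f *
  ((updF f v S == f')%:R * (restr X E :|: star v S == G')%:R).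
pose B := star v X.
have Hphi : forall S E, phi S E = phi S (E :\: B).
  move=> S E; rewrite /phi /B (restr_star E vX); congr (_ * _).
  by apply: sd_dep; rewrite /X restr_star.
transitivity (\sum_(S : {set 'I_n} | S \subset X) (p ^+ #|S| * (1 - p) ^+ (#|X| - #|S|)) *
                 \sum_E gnp_prob p E * phi S E).
  rewrite (eq_bigr (fun E => \sum_(S : {set 'I_n} | S \subset X) gnp_prob p E * sfap_dist R E t f *
     ((explore_update (f, restr X E) v S == (f', G'))%:R *
      (p ^+ #|S| * (1 - p) ^+ (#|X| - #|S|))))); last by move=> E _; rewrite big_distrr.
  rewrite exchange_big; apply: eq_bigr => S SX; rewrite big_distrr; apply: eq_bigr => E _ /=.
  rewrite (_ : explore_update _ _ _ = (updF f v S, restr X E :|: star v S)) //.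
  rewrite xpair_eqE -mulnb natrM /phi; ring.
transitivity (\sum_(S : {set 'I_n} | S \subset X) \sum_E gnp_prob p E * phi S E * (E :&: B == star v S)%:R).
  apply: eq_bigr => S SX; symmetry.
  rewrite (eq_bigr (fun E => wall (qg p) E * phi S E * (E :&: B == star v S)%:R)); last first.
    by move=> E _; rewrite gnp_wall.
  rewrite (@indep _ _ _ (qg_sum p) B (star v S) (phi S)); [|exact: imsetS|exact: Hphi].
  rewrite wt_star //; congr (_ * _); apply: eq_bigr => E _; by rewrite gnp_wall.
rewrite exchange_big; apply: eq_bigr => E _.
rewrite (bigD1 (nbr E X v)) /=; last by apply/subsetP => w; rewrite inE => /andP[].
rewrite big1 ?addr0; last first.
  move=> S /andP[_ ne].
  by rewrite /B meet_star (inj_eq (@star_inj _ v)) eq_sym (negbTE ne) mulr0.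
rewrite /B meet_star eqxx mulr1 /phi.
case: (eqVneq (sfap_update E f v) f') => [upd|ne].
  have Hs : selected f' = v |: X by rewrite -upd /sfap_update sel_upd.
  rewrite Hs restr_add // -(su_updF E f v) upd eqxx /=; ring.
by rewrite -(su_updF E f v) (negbTE ne) /=; ring.
Qed.

End Main2.

Section Main3.
Variables (R : realFieldType) (n K : nat) (p : R).

Lemma gnp_sum1 : \sum_(E : graph n) gnp_prob p E = 1.
Proof.
rewrite -(@wt_sum1 _ _ _ (@qg_sum R n p) setT).
apply: congr_big => // [T|T _]; first by rewrite subsetT.
by rewrite gnp_wall /wall /wt; apply: eq_bigl => e; rewrite inE.
Qed.

Lemma restr0 (E : graph n) : restr set0 E = set0.
Proof.
apply/setP => e; rewrite !inE subset0.
by case: eqP => [->|]; rewrite ?cards0 ?andbF.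
Qed.

Lemma explore_inv t (f : fstate n K) (G : graph n) :
  explore_dist p t (f, G) =
  \sum_E (restr (selected f) E == G)%:R * gnp_prob p E * sfap_dist R E t f.
Proof.
elim: t f G => [|t IH] f G /=.
  rewrite xpair_eqE; case: eqP => [->|_] /=.
    rewrite sel_none (eq_bigr (fun E => (G == set0)%:R * gnp_prob p E)); last first.
      by move=> E _; rewrite restr0 eq_sym mulr1.
    by rewrite -big_distrr /= gnp_sum1 mulr1.
  by rewrite big1 // => E _; rewrite mulr0.
rewrite (eq_bigr (fun s : estate n K => explore_dist p t (s.1, s.2) *
                     explore_kernel p (s.1, s.2) (f, G))); last by case.
rewrite -(pair_bigA _ (fun f0 G0 => explore_dist p t (f0, G0) *
                     explore_kernel p (f0, G0) (f, G))) /=.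
transitivity (\sum_(f0 : fstate n K) \sum_(E : graph n) gnp_prob p E * sfap_dist R E t f0 *
                explore_kernel p (f0, restr (selected f0) E) (f, G)).
  apply: eq_bigr => f0 _.
  under eq_bigr => G0 _ do rewrite IH big_distrl /=.
  rewrite exchange_big; apply: eq_bigr => E _ /=.
  rewrite (bigD1 (restr (selected f0) E)) //= eqxx big1 ?addr0; last first.
    by move=> G0 /negbTE ne; rewrite eq_sym ne !mul0r.
  by rewrite /=; ring.
rewrite (eq_bigr (fun E => \sum_(f0 : fstate n K) (restr (selected f) E == G)%:R *
           gnp_prob p E * (sfap_dist R E t f0 * sfap_kernel R E f0 f))); last first.
  by move=> E _; rewrite big_distrr.
rewrite [RHS]exchange_big; apply: eq_bigr => f0 _.
pose u : R := #|unselected f0|%:R.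
transitivity (\sum_(v in unselected f0) u^-1 *
  \sum_(E : graph n) gnp_prob p E * sfap_dist R E t f0 *
     \sum_(S : {set 'I_n} | S \subset selected f0)
        ((explore_update (f0, restr (selected f0) E) v S == (f, G))%:R *
         (p ^+ #|S| * (1 - p) ^+ (#|selected f0| - #|S|)))).
  rewrite /explore_kernel /=.
  under [LHS]eq_bigr => E _ do rewrite big_distrr.
  rewrite [LHS]exchange_big; apply: eq_bigr => v vU; rewrite big_distrr; apply: eq_bigr => E _ /=.
  rewrite (eq_bigr (fun S : {set 'I_n} => u^-1 *
        ((explore_update (f0, restr (selected f0) E) v S == (f, G))%:R *
         (p ^+ #|S| * (1 - p) ^+ (#|selected f0| - #|S|))))); last first.
    by move=> S _; rewrite /u; ring.
  rewrite -big_distrr /=; ring.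
transitivity (\sum_(v in unselected f0) u^-1 *
  \sum_(E : graph n) (restr (selected f) E == G)%:R * gnp_prob p E *
       sfap_dist R E t f0 * (sfap_update E f0 v == f)%:R); last first.
  rewrite /sfap_kernel.
  under [RHS]eq_bigr => E _ do rewrite !big_distrr.
  rewrite [RHS]exchange_big; apply: eq_bigr => v vU; rewrite big_distrr; apply: eq_bigr => E _ /=.
  by rewrite /u; ring.
by apply: eq_bigr => v vU; rewrite key_v.
Qed.

End Main3.

Lemma restr_full (R : realFieldType) (n K : nat) (p : R) (E : graph n) (f : fstate n K) :
  gnp_prob p E != 0 -> sfap_dist R E n f != 0 -> restr (selected f) E = E.
Proof.
move=> g0 s0.
have Hs : selected f = setT.
  have Hc : #|selected f| = n.
    by apply/eqP; apply: contraNT s0 => ne; rewrite sd_card.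
  by apply/eqP; rewrite eqEcard subsetT cardsT card_ord Hc leqnn.
have HE : E \subset [set e : {set 'I_n} | #|e| == 2%N].
  by move: g0; rewrite /gnp_prob; case: ifP => // _; rewrite eqxx.
apply/setP => e; rewrite !inE Hs subsetT /=.
case eE: (e \in E) => //=; by move/subsetP: HE => /(_ e eE); rewrite inE.
Qed.

Theorem proposition3 (R : realFieldType) (n K : nat) (p : R) :
  (1 <= n)%N -> (1 <= K)%N -> 0 <= p -> p <= 1 ->
  forall (E : graph n) (A : {ffun 'I_K -> {set 'I_n}}),
    explore_law p E A = sfap_law p E A.
Proof.
move=> _ _ _ _ E A; rewrite /explore_law /sfap_law.
transitivity (\sum_(f : fstate n K | freq_sets f == A) explore_dist p n (f, E)).
  rewrite big_mkcond /= (eq_bigr (fun s : estate n K =>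
    if (s.2 == E) && (freq_sets s.1 == A) then explore_dist p n (s.1, s.2) else 0));
    last by case.
  rewrite -(pair_bigA _ (fun f G => if (G == E) && (freq_sets f == A)
                                   then explore_dist p n (f, G) else 0)) [RHS]big_mkcond.
  apply: eq_bigr => f _.
  by rewrite (bigD1 E) //= eqxx /= big1 ?addr0 // => G /negbTE ->.
rewrite [RHS](bigD1 E) //= [X in _ = _ + X]big1 ?addr0; last first.
  move=> E' ne; apply: big1 => f /andP[/eqP e]; by move: ne; rewrite e eqxx.
rewrite [RHS](eq_bigl (fun f => freq_sets f == A)); last by move=> f; rewrite eqxx.
apply: eq_bigr => f _; rewrite explore_inv.
rewrite (bigD1 E) //= big1 ?addr0.
  have [g0|g0] := eqVneq (gnp_prob p E) 0; first by rewrite g0 !mulr0 mul0r.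
  have [s0|s0] := eqVneq (sfap_dist R E n f) 0; first by rewrite s0 !mulr0.
  by rewrite (restr_full g0 s0) eqxx mul1r.
move=> E' ne.
have [g0|g0] := eqVneq (gnp_prob p E') 0; first by rewrite g0 mulr0 mul0r.
have [s0|s0] := eqVneq (sfap_dist R E' n f) 0; first by rewrite s0 mulr0.
by rewrite (restr_full g0 s0) (negbTE ne) !mul0r.
Qed.
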